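(* For every MPDA $\mathcal A$ there is a pop-normalized MPDA $\mathcal A'$ with $L(\mathcal A')=L(\mathcal A)$.
   Context: A Moore push-down automaton (MPDA) is $\mathcal A=(Q,\Sigma,\Gamma,\delta,\tau,I,F)$ with finite sets $Q$ (states), $\Sigma$ (input symbols), $\Gamma$ (stack symbols), transitions $\delta\subseteq(Q\times\Gamma^{\le1}\times\Gamma^{\le1}\times Q)\setminus(Q\times\Gamma\times\Gamma\times Q)$ with $\Gamma^{\le1}=\{\varepsilon\}\cup\Gamma$, output function $\tau:Q\to\Sigma$, and $I,F\subseteq Q$. Configurations are $\langle q,\alpha\rangle\in Q\times\Gamma^*$; moves $\langle q,\gamma\alpha\rangle\vdash\langle q',\gamma'\alpha\rangle$ for $(q,\gamma,\gamma',q')\in\delta$ whenever $\gamma\alpha\ne\varepsilon$. Initial configurations: $q\in I$, $\alpha\in\Gamma$; final: $q\in F$, $\alpha=\varepsilon$. $L(\mathcal A)$ is the set of strings $\tau(q_0)\cdots\tau(q_n)$ for accepting runs $\langle q_0,\alpha_0\rangle\vdash\cdots\vdash\langle q_n,\alpha_n\rangle$ from an initial to a final configuration. The MPDA is pop-normalized if there is a map $\mathrm{return}:\Gamma\to Q$ such that $q'=\mathrm{return}(\gamma)$ for every transition $(q,\gamma,\varepsilon,q')\in\delta$ with $\gamma\in\Gamma$. *)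

(* Defs.v *)
From mathcomp Require Import all_boot.
Set Implicit Arguments. Unset Strict Implicit. Unset Printing Implicit Defensive.

(* Moore push-down automata (MPDA).  Gamma^{<=1} is rendered as [option G]
   (None = epsilon, Some g = the one-letter word g). *)
Record MPDA (Sigma : Type) := {
  mQ : finType;
  mG : finType;
  mdelta : mQ -> option mG -> option mG -> mQ -> bool;
  mtau : mQ -> Sigma;
  mI : mQ -> bool;
  mF : mQ -> bool
}.
Arguments mQ {Sigma} _.
Arguments mG {Sigma} _.
Arguments mdelta {Sigma} _ _ _ _ _.
Arguments mtau {Sigma} _ _.
Arguments mI {Sigma} _ _.
Arguments mF {Sigma} _ _.

Definition wf_MPDA Sigma (A : MPDA Sigma) : Prop :=
  forall q g g' q', mdelta A q (Some g) (Some g') q' = false.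

Definition owd (G : Type) (o : option G) : seq G :=
  match o with None => [::] | Some g => [:: g] end.

Definition config Sigma (A : MPDA Sigma) : Type := (mQ A * seq (mG A))%type.

Definition step Sigma (A : MPDA Sigma) (c c' : config A) : Prop :=
  exists (q q' : mQ A) (g g' : option (mG A)) (alpha : seq (mG A)),
    [/\ mdelta A q g g' q',
        owd g ++ alpha <> [::],
        c = (q, owd g ++ alpha) &
        c' = (q', owd g' ++ alpha)].

Fixpoint is_run Sigma (A : MPDA Sigma) (c0 : config A) (cs : seq (config A))
  : Prop :=
  match cs with
  | [::] => True
  | c1 :: cs' => step c0 c1 /\ is_run c1 cs'
  end.

Definition initial_config Sigma (A : MPDA Sigma) (c : config A) : Prop :=
  mI A c.1 /\ size c.2 = 1.

Definition final_config Sigma (A : MPDA Sigma) (c : config A) : Prop :=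
  mF A c.1 /\ c.2 = [::].

Definition lang Sigma (A : MPDA Sigma) (w : seq Sigma) : Prop :=
  exists (c0 : config A) (cs : seq (config A)),
    [/\ initial_config c0,
        is_run c0 cs,
        final_config (last c0 cs) &
        w = map (fun c : config A => mtau A c.1) (c0 :: cs)].

Definition pop_normalized Sigma (A : MPDA Sigma) : Prop :=
  exists ret : mG A -> mQ A,
    forall q g q', mdelta A q (Some g) None q' -> q' = ret g.

(* Main.v *)
Require Import Defs.
From mathcomp Require Import all_boot.

Section Constr.
Variable Sigma : finType.
Variable A : MPDA Sigma.

Definition dl (q : mQ A) (o o' : option (mG A * mQ A)) (q' : mQ A) : bool :=
  match o, o' with
  | None, None => mdelta A q None None q'
  | None, Some (g, _) => mdelta A q None (Some g) q'
  | Some (g, r), None => mdelta A q (Some g) None q' && (q' == r)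
  | Some _, Some _ => false
  end.

Definition A' : MPDA Sigma :=
  {| mQ := mQ A; mG := (mG A * mQ A)%type; mdelta := dl;
     mtau := mtau A; mI := mI A; mF := mF A |}.

Definition proj (c : config A') : config A := (c.1, map fst c.2).

Lemma step_proj (c c' : config A') : step c c' -> step (proj c) (proj c').
Proof.
move=> [q [q' [g [g' [al [Hd Hne -> ->]]]]]].
rewrite /proj /=.
exists q, q', (omap fst g), (omap fst g'), (map fst al).
case: g g' Hd Hne => [[g r]|] [[g' r']|] //= Hd Hne; split => //.
- by move/andP: Hd => [].
all: try by case: al Hne.
all: try by [].
Qed.

Lemma run_proj (c0 : config A') cs : is_run c0 cs ->
  is_run (proj c0) (map proj cs) /\ proj (last c0 cs) = last (proj c0) (map proj cs).
Proof.
elim: cs c0 => [|c1 cs IH] c0 //= [Hs Hr].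
have [H1 H2] := IH _ Hr. split => //. split => //. exact: step_proj.
Qed.

Hypothesis wfA : wf_MPDA A.

Lemma lift (c0 : config A) cs : is_run c0 cs -> final_config (last c0 cs) ->
  exists (b : seq (mG A')) (cs' : seq (config A')),
    [/\ map fst b = c0.2, is_run ((c0.1, b) : config A') cs',
        final_config (last ((c0.1, b) : config A') cs') &
        map (fun c : config A' => c.1) cs' = map (fun c : config A => c.1) cs].
Proof.
elim: cs c0 => [|c1 cs IH] [q0 a0] /=.
  move=> _ [HF Ha]; exists [::], [::]; split => //=; by rewrite Ha.
move=> [Hs Hr] Hf.
have [b1 [cs1 [Hb1 Hr1 Hf1 Hm1]]] := IH _ Hr Hf.
move: Hs => [q [q' [g [g' [al [Hd Hne [-> ->] E1]]]]]].
subst c1 => /=; clear Hf Hr; move: Hb1 Hr1 Hf1 Hm1 => /= Hb1 Hr1 Hf1 Hm1.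
case: g g' Hd Hne Hb1 Hr1 Hf1 Hm1 => [g|] [g'|] //= Hd Hne Hb1 Hr1 Hf1 Hm1.
- by rewrite wfA in Hd.
- exists ((g, q') :: b1), ((q', b1) :: cs1); split => //=; last by rewrite Hm1.
    by rewrite Hb1.
  split => //. exists q, q', (Some (g, q')), None, b1; split => //=.
  by rewrite Hd eqxx.
- case: b1 Hb1 Hr1 Hf1 Hm1 => [|[g1 r1] b1] //= [Eg Hb1] Hr1 Hf1 Hm1.
  exists b1, ((q', (g1, r1) :: b1) :: cs1); split => //=; last by rewrite Hm1.
  split => //. exists q, q', None, (Some (g1, r1)), b1; split => //=.
  + by rewrite Eg.
  + case: b1 Hb1 {Hr1 Hf1} => //= Hb1; subst al; by [].
- exists b1, ((q', b1) :: cs1); split => //=; last by rewrite Hm1.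
  split => //. exists q, q', None, None, b1; split => //=.
  by case: b1 Hb1 {Hr1 Hf1} => //= Hb1; subst al.
Qed.

End Constr.

Theorem lemma3p3 (Sigma : finType) (A : MPDA Sigma) :
  wf_MPDA A ->
  exists A' : MPDA Sigma,
    [/\ wf_MPDA A', pop_normalized A' & forall w, lang A' w <-> lang A w].
Proof.
move=> wfA; exists (A' Sigma A); split.
- by move=> q [g r] [g' r'] q'.
- exists snd => q [g r] q' /= /andP [_ /eqP ->] //.
- move=> w; split.
  + move=> [c0 [cs [[HI Hs] Hr [HF Hl] ->]]].
    have [Hr' Hlast] := @run_proj Sigma A _ _ Hr.
    exists (proj Sigma A c0), (map (@proj Sigma A) cs); split => //.
    * by split => //=; rewrite size_map.
    * by rewrite -Hlast /proj /= /= Hl.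
    * by rewrite /= -map_comp.
  + move=> [c0 [cs [[HI Hs] Hr Hf ->]]].
    have [b [cs' [Hb Hr' Hf' Hm]]] := @lift Sigma A wfA _ _ Hr Hf.
    exists ((c0.1, b) : config (A' Sigma A)), cs'; split => //.
    * by split => //=; rewrite -(size_map fst) Hb.
    * rewrite /=; congr (_ :: _); move: Hm => /(congr1 (map (mtau A))); rewrite -!map_comp; exact.
Qed.
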